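(* Let $P=\frac{1}{\sqrt2}\begin{bmatrix}1&1\\0&0\end{bmatrix}$ and $Q=\frac{1}{\sqrt2}\begin{bmatrix}0&0\\1&-1\end{bmatrix}$. For $\varphi=\begin{bmatrix}\alpha\\ \beta\end{bmatrix}\in\mathbb{C}^2$ with $|\alpha|^2+|\beta|^2=1$, define $\Psi^{(n)}_k(\varphi)\in\mathbb{C}^2$ ($n\in\mathbb{Z}_+$, $k\in\mathbb{Z}$) by $\Psi^{(0)}_0(\varphi)=\varphi$, $\Psi^{(0)}_k(\varphi)=0$ for $k\ne0$, and $\Psi^{(n+1)}_k(\varphi)=Q\Psi^{(n)}_{k-1}(\varphi)+P\Psi^{(n)}_{k+1}(\varphi)$, and let $X^\varphi_n$ be the $\mathbb{Z}$-valued random variable with $P(X^\varphi_n=k)=|\Psi^{(n)}_k(\varphi)|^2$ (Euclidean norm). Let $\Phi$ be the set of such unit vectors $\varphi$ and define $\Phi_\perp=\{\varphi=(\alpha,\beta)^t\in\Phi: |\alpha|=|\beta|,\ \alpha\bar\beta+\bar\alpha\beta=0\}$, $\Phi_s=\{\varphi\in\Phi: P(X^\varphi_n=k)=P(X^\varphi_n=-k)\text{ for all } n\in\mathbb{Z}_+,\ k\in\mathbb{Z}\}$, $\Phi_0=\{\varphi\in\Phi: E(X^\varphi_n)=0\text{ for all } n\in\mathbb{Z}_+\}$. Then $\Phi_\perp=\Phi_s=\Phi_0$.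
   Context: This is the one-dimensional Hadamard walk with Hadamard matrix $H=\frac{1}{\sqrt2}\begin{bmatrix}1&1\\1&-1\end{bmatrix}=P+Q$; the upper/lower component of $\Psi^{(n)}_k$ is the amplitude of left/right chirality at site $k$ at time $n$, and $\sum_k|\Psi^{(n)}_k(\varphi)|^2=1$. $\mathbb{Z}_+$ denotes the non-negative integers and $E(X^\varphi_n)=\sum_k k\,P(X^\varphi_n=k)$. (The paper realizes the walk on a large cycle of $2N+1$ sites; for the times considered this coincides with the walk on $\mathbb{Z}$.) *)

(* Defs.v *)
From HB Require Import structures.
From mathcomp Require Import all_boot all_order all_algebra.
From mathcomp Require Import complex.
From mathcomp Require Import reals.
Set Implicit Arguments. Unset Strict Implicit. Unset Printing Implicit Defensive.
Import Order.TTheory GRing.Theory Num.Theory.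
Local Open Scope ring_scope.
Local Open Scope complex_scope.

Section Hadamard.
Variable R : realType.
Notation C := (R[i]).

Definition isq2 : C := ((Num.sqrt (2%:R : R))^-1)%:C.

Definition Pmat : 'M[C]_2 :=
  \matrix_(i < 2, j < 2)
    (if i == 0 :> nat then isq2 else 0).
Definition Qmat : 'M[C]_2 :=
  \matrix_(i < 2, j < 2)
    (if i == 0 :> nat then 0
     else if j == 0 :> nat then isq2
          else - isq2).

Fixpoint Psi (n : nat) (phi : 'cV[C]_2) (k : int) : 'cV[C]_2 :=
  match n with
  | 0%N => if k == 0 then phi else 0
  | n'.+1 => Qmat *m Psi n' phi (k - 1) + Pmat *m Psi n' phi (k + 1)
  end.

Definition prob (phi : 'cV[C]_2) (n : nat) (k : int) : C :=
  `|Psi n phi k 0 0| ^+ 2 + `|Psi n phi k 1 0| ^+ 2.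

(* E(X^phi_n) = sum_k k P(X^phi_n = k); the sum is over k in [-n, n],
   outside of which Psi^(n)_k = 0. *)
Definition expect (phi : 'cV[C]_2) (n : nat) : C :=
  \sum_(i < (2 * n).+1) ((i%:Z - n%:Z)%:~R * prob phi n (i%:Z - n%:Z)).

Definition in_Phi (phi : 'cV[C]_2) : Prop :=
  `|phi 0 0| ^+ 2 + `|phi 1 0| ^+ 2 = 1.

Definition in_Phi_perp (phi : 'cV[C]_2) : Prop :=
  in_Phi phi /\ `|phi 0 0| = `|phi 1 0| /\
  phi 0 0 * (phi 1 0)^* + (phi 0 0)^* * phi 1 0 = 0.

Definition in_Phi_s (phi : 'cV[C]_2) : Prop :=
  in_Phi phi /\ forall (n : nat) (k : int), prob phi n k = prob phi n (- k).

Definition in_Phi_0 (phi : 'cV[C]_2) : Prop :=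
  in_Phi phi /\ forall n : nat, expect phi n = 0.

End Hadamard.

(* Main.v *)
Require Import Defs.
From HB Require Import structures.
From mathcomp Require Import all_boot all_order all_algebra.
From mathcomp Require Import complex reals.
From mathcomp Require Import ring lra zify.
Set Implicit Arguments. Unset Strict Implicit. Unset Printing Implicit Defensive.
Import Order.TTheory GRing.Theory Num.Theory.
Local Open Scope ring_scope.
Local Open Scope complex_scope.

Section S.
Variable R : realType.
Notation C := (R[i]).
Notation t := (isq2 R).

Lemma ord2E0 : (ord0 : 'I_2) = 0. Proof. by apply/val_inj. Qed.
Lemma ord2E1 : (lift ord0 ord0 : 'I_2) = 1. Proof. by apply/val_inj. Qed.

Lemma Psi_S0 n (phi : 'cV[C]_2) k :
  Psi (n.+1) phi k 0 0 = t * (Psi n phi (k+1) 0 0 + Psi n phi (k+1) 1 0).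
Proof.
rewrite /= !mxE !big_ord_recl !big_ord0 !mxE /= ord2E0 ord2E1 !mul0r !addr0 ?add0r.
by rewrite mulrDr.
Qed.
Lemma Psi_S1 n (phi : 'cV[C]_2) k :
  Psi (n.+1) phi k 1 0 = t * (Psi n phi (k-1) 0 0 - Psi n phi (k-1) 1 0).
Proof.
rewrite /= !mxE !big_ord_recl !big_ord0 !mxE /= ord2E0 ord2E1 !mul0r !addr0 ?add0r.
by rewrite mulrBr mulNr.
Qed.
Lemma Psi0E (phi : 'cV[C]_2) k i : Psi 0 phi k i 0 = if k == 0 then phi i 0 else 0.
Proof. by rewrite /=; case: (k == 0) => //; rewrite mxE. Qed.

Lemma PsiScale (phi phi' : 'cV[C]_2) c :
  phi' 0 0 = c * phi 0 0 -> phi' 1 0 = c * phi 1 0 -> forall n k,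
  Psi n phi' k 0 0 = c * Psi n phi k 0 0 /\ Psi n phi' k 1 0 = c * Psi n phi k 1 0.
Proof.
move=> h0 h1; elim=> [|n IH] k.
  rewrite !Psi0E; case: (k == 0) => //; by rewrite mulr0.
rewrite !Psi_S0 !Psi_S1 !(proj1 (IH _)) !(proj2 (IH _)); split; ring.
Qed.

Lemma PsiSwap (phi phi' : 'cV[C]_2) :
  phi' 0 0 = - phi 1 0 -> phi' 1 0 = phi 0 0 -> forall n k,
  Psi n phi' k 0 0 = (-1)^+n * - Psi n phi (-k) 1 0 /\
  Psi n phi' k 1 0 = (-1)^+n * Psi n phi (-k) 0 0.
Proof.
move=> h0 h1; elim=> [|n IH] k.
  rewrite !Psi0E oppr_eq0; case: (k == 0) => //; rewrite ?expr0 ?mul1r ?h0 ?h1 //.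
  by rewrite oppr0.
rewrite !Psi_S0 !Psi_S1 !(proj1 (IH _)) !(proj2 (IH _)) !opprD !opprK exprS; split; ring.
Qed.
Lemma probScale (phi phi' : 'cV[C]_2) c :
  phi' 0 0 = c * phi 0 0 -> phi' 1 0 = c * phi 1 0 -> forall n k,
  prob phi' n k = `|c|^+2 * prob phi n k.
Proof.
move=> h0 h1 n k; rewrite /prob !(proj1 (PsiScale h0 h1 n k)) !(proj2 (PsiScale h0 h1 n k)).
by rewrite !normrM !exprMn mulrDr.
Qed.

Lemma probSwap (phi phi' : 'cV[C]_2) :
  phi' 0 0 = - phi 1 0 -> phi' 1 0 = phi 0 0 -> forall n k,
  prob phi' n k = prob phi n (-k).
Proof.
move=> h0 h1 n k; rewrite /prob !(proj1 (PsiSwap h0 h1 n k)) !(proj2 (PsiSwap h0 h1 n k)).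
by rewrite !normrM !normrX !normrN normr1 expr1n !mul1r addrC.
Qed.

Lemma perp_s (phi : 'cV[C]_2) : in_Phi_perp phi -> in_Phi_s phi.
Proof.
move=> [hP [hab hre]]; split => //.
set a : C := phi 0 0 in hP hab hre *; set b : C := phi 1 0 in hP hab hre *.
have a0 : a != 0.
  apply/eqP => a0; move: hP; rewrite /in_Phi -/a -/b -hab a0 normr0 expr0n /= add0r.
  by move/eqP; rewrite eq_sym oner_eq0.
have b0 : b != 0 by rewrite -normr_eq0 -hab normr_eq0.
have hsq : a * a^* = b * b^* by rewrite -!sqr_normc hab.
have hab2 : a ^+ 2 = - b ^+ 2.
  apply/eqP; rewrite -subr_eq0 opprK; apply/eqP.
  have bc0 : b^* != 0 by rewrite conjc_eq0.
  apply: (mulIf bc0).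
  rewrite mul0r mulrDl expr2 -mulrA.
  have -> : a * b^* = - (a^* * b) by apply/eqP; rewrite -subr_eq0 opprK hre.
  rewrite mulrN mulrA hsq; ring.
set phi' : 'cV[C]_2 := \col_i (if i == 0 then - phi 1 0 else phi 0 0).
have h0 : phi' 0 0 = (- b / a) * a by rewrite mxE /= divfK.
have h1 : phi' 1 0 = (- b / a) * b.
  rewrite mxE /=; apply: (mulIf a0); rewrite mulrAC divfK // mulNr -expr2 -hab2; by rewrite expr2.
have hc : `|- b / a| ^+ 2 = 1.
  by rewrite normrM normrN normrV ?unitfE // -hab mulfV ?normr_eq0 // expr1n.
move=> n k.
have := probScale h0 h1 n k; rewrite hc mul1r => <-.
by apply: probSwap; rewrite mxE.
Qed.
Lemma s_0 (phi : 'cV[C]_2) : in_Phi_s phi -> in_Phi_0 phi.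
Proof.
move=> [hP hs]; split => // n.
set E := expect phi n.
have hE : E = - E.
  rewrite {1}/E /expect (reindex_inj rev_ord_inj) /= /E /expect -sumrN.
  apply: eq_bigr => i _.
  have -> : ((2 * n).+1 - i.+1)%N%:Z - n%:Z = - (i%:Z - n%:Z).
    have := ltn_ord i; lia.
  by rewrite -hs mulrNz mulNr.
have : E *+ 2 = 0 by rewrite mulr2n {1}hE addNr.
by move/eqP; rewrite -mulr_natr mulf_eq0 pnatr_eq0 orbF => /eqP.
Qed.
Fixpoint Wc (n : nat) (k : int) : (int * int) * (int * int) :=
  match n with
  | 0%N => if k == 0 then ((1, 0), (0, 1)) else ((0, 0), (0, 0))
  | n'.+1 => let r := Wc n' (k + 1) in let s := Wc n' (k - 1) in
     ((r.1.1 + r.2.1, r.1.2 + r.2.2), (s.1.1 - s.2.1, s.1.2 - s.2.2))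
  end.

Lemma PsiW (phi : 'cV[C]_2) n k :
  Psi n phi k 0 0 = t ^+ n * ((Wc n k).1.1%:~R * phi 0 0 + (Wc n k).1.2%:~R * phi 1 0) /\
  Psi n phi k 1 0 = t ^+ n * ((Wc n k).2.1%:~R * phi 0 0 + (Wc n k).2.2%:~R * phi 1 0).
Proof.
elim: n k => [|n IH] k.
  rewrite !Psi0E /=; case: (k == 0) => /=; split; ring.
rewrite Psi_S0 Psi_S1 (proj1 (IH _)) (proj2 (IH _)) (proj1 (IH (k-1))) (proj2 (IH (k-1))) /=.
rewrite exprS; split; ring.
Qed.

Lemma normt : `|t| ^+ 2 = 2^-1.
Proof.
rewrite sqr_normc /isq2 conjc_real -rmorphM -expr2 exprVn sqr_sqrtr ?ler0n //.
by rewrite fmorphV rmorph_nat.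
Qed.

Lemma probW (phi : 'cV[C]_2) n k :
  prob phi n k = (2^-1) ^+ n *
   (`|(Wc n k).1.1%:~R * phi 0 0 + (Wc n k).1.2%:~R * phi 1 0| ^+ 2 +
    `|(Wc n k).2.1%:~R * phi 0 0 + (Wc n k).2.2%:~R * phi 1 0| ^+ 2).
Proof.
rewrite /prob (proj1 (PsiW _ _ _)) (proj2 (PsiW _ _ _)) !normrM !normrX !exprMn -!exprM.
by rewrite mulnC !exprM normt mulrDr.
Qed.
Ltac evalW := repeat match goal with |- context[Wc ?n ?k] =>
  let v := eval vm_compute in (Wc n k) in change (Wc n k) with v end.

Lemma cjD (x y : C) : (x + y)^* = x^* + y^*. Proof. exact: rmorphD. Qed.
Lemma cjB (x y : C) : (x - y)^* = x^* - y^*. Proof. exact: rmorphB. Qed.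
Lemma cjM (x y : C) : (x * y)^* = x^* * y^*. Proof. exact: rmorphM. Qed.
Lemma cjI (z : int) : (z%:~R : C)^* = z%:~R. Proof. exact: rmorph_int. Qed.

Lemma nsq (x : C) : `|x| ^+ 2 = x * x^*. Proof. exact: sqr_normc. Qed.

Lemma nlin (x y : C) (p q : int) :
  `|p%:~R * x + q%:~R * y| ^+ 2 =
  (p * p)%:~R * `|x| ^+ 2 + (q * q)%:~R * `|y| ^+ 2 + (p * q)%:~R * (x * y^* + x^* * y).
Proof.
transitivity ((p%:~R * x + q%:~R * y) * (p%:~R * x^* + q%:~R * y^*)).
  rewrite nsq; congr (_ * _); by rewrite rmorphD !rmorphM !rmorph_int.
rewrite !nsq; ring.
Qed.

Lemma expect1 (phi : 'cV[C]_2) :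
  expect phi 1 = - (phi 0 0 * (phi 1 0)^* + (phi 0 0)^* * phi 1 0).
Proof.
rewrite /expect !big_ord_recr big_ord0 /= !probW.
evalW. rewrite /= !nlin.
by field.
Qed.

Lemma expect3 (phi : 'cV[C]_2) :
  expect phi 3 = (`|phi 1 0| ^+ 2 - `|phi 0 0| ^+ 2) / 2
     - (phi 0 0 * (phi 1 0)^* + (phi 0 0)^* * phi 1 0).
Proof.
rewrite /expect !big_ord_recr big_ord0 /= !probW.
evalW. rewrite /= !nlin.
by field.
Qed.
Lemma zero_perp (phi : 'cV[C]_2) : in_Phi_0 phi -> in_Phi_perp phi.
Proof.
move=> [hP hE]; split => //.
have h1 := hE 1%N; rewrite expect1 in h1.
have hre : phi 0 0 * (phi 1 0)^* + (phi 0 0)^* * phi 1 0 = 0.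
  by apply/eqP; rewrite -oppr_eq0 h1.
split => //.
have h3 := hE 3%N; rewrite expect3 hre subr0 in h3.
have : `|phi 0 0| ^+ 2 = `|phi 1 0| ^+ 2.
  apply/eqP; rewrite eq_sym -subr_eq0; apply/eqP.
  by move/eqP: h3; rewrite mulf_eq0 invr_eq0 pnatr_eq0 orbF => /eqP.
by move/eqP; rewrite eqrXn2 // => /eqP.
Qed.
End S.

Theorem theorem2 (R : realType) (phi : 'cV[R[i]]_2) :
  (in_Phi_perp phi <-> in_Phi_s phi) /\ (in_Phi_s phi <-> in_Phi_0 phi).
Proof.
split; split.
- exact: perp_s.
- by move=> h; apply: zero_perp; apply: s_0.
- exact: s_0.
- by move=> h; apply: perp_s; apply: zero_perp.
Qed.
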